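(* Let $\mathbf{T}^{\{\cap,\cdot,\mathrm{I},\mathrm{D}\}}$ be the set of CoR terms built only from variables and the operations $\cap$, $\cdot$, $\mathrm{I}$, $\mathrm{D}$. If $\mathbf{T}^{\{\cap,\cdot,\mathrm{I},\mathrm{D}\}}_{\le 1}/{\sim_{\mathrm{REL}}}$ is finite, then $(\Sigma^{\mathrm{CoR}}_1)_{\le 1}/{\sim_{\mathrm{REL}}}$ is finite.
   Context: Fix a non-empty finite set $V$ of variables. CoR terms are generated by $t ::= a \mid \bot \mid \top \mid t \cup t \mid t \cap t \mid t^{-} \mid \mathrm{I} \mid \mathrm{D} \mid t \cdot t \mid t \dagger t \mid t^{\pi}$, where $a \in V$ and $\pi$ ranges over all maps $\{1,2\}\to\{1,2\}$. A structure $M$ consists of a non-empty set $|M|$ and a binary relation $a^M\subseteq|M|^2$ for each $a\in V$. The interpretation $[\![t]\!]_M\subseteq|M|^2$: $[\![a]\!]_M=a^M$, $[\![\bot]\!]_M=\emptyset$, $[\![\top]\!]_M=|M|^2$, $\cup,\cap$ set-theoretic, $[\![t^-]\!]_M=|M|^2\setminus[\![t]\!]_M$, $[\![\mathrm{I}]\!]_M=\{(x,y):x=y\}$, $[\![\mathrm{D}]\!]_M=\{(x,y):x\ne y\}$, $R\cdot S=\{(x,y):\exists z,(x,z)\in R\wedge(z,y)\in S\}$, $R\dagger S=\{(x,y):\forall z,(x,z)\in R\vee(z,y)\in S\}$, $R^{\pi}=\{(x_1,x_2):(x_{\pi(1)},x_{\pi(2)})\in R\}$. $t\sim_{\mathrm{REL}}s$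 iff $[\![t]\!]_M=[\![s]\!]_M$ for all structures $M$. $\mathrm{vo}(t)$ is the number of occurrences of variables in $t$, $S_{\le k}=\{t\in S:\mathrm{vo}(t)\le k\}$. $\Sigma^{\mathrm{CoR}}_0$ is the set of terms containing neither $\cdot$ nor $\dagger$, and $\Sigma^{\mathrm{CoR}}_1$ is the least set containing $\Sigma^{\mathrm{CoR}}_0$ and closed under $\cup$, $\cap$, $\cdot$ and $(\cdot)^{\pi}$ for all $\pi$. *)

(* Defs.v *)
From mathcomp Require Import all_boot.
From Stdlib Require Import List.
Set Implicit Arguments. Unset Strict Implicit. Unset Printing Implicit Defensive.

(* Positions {1,2} are represented by 'I_2 (0 stands for 1, 1 stands for 2). *)

Inductive term (V : Type) : Type :=
| Var  of V
| Bot
| Top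
| Cup  of term V & term V
| Cap  of term V & term V
| Compl of term V
| Iden
| Diff
| Comp of term V & term V
| Dag  of term V & term V
| Perm of term V & ('I_2 -> 'I_2).

Arguments Bot {V}. Arguments Top {V}. Arguments Iden {V}. Arguments Diff {V}.

Record structure (V : Type) := Structure {
  carrier : Type;
  inhabitant : carrier;
  rel_of : V -> carrier -> carrier -> Prop }.

Definition tup (T : Type) (x1 x2 : T) (i : 'I_2) : T :=
  if val i == 0%N then x1 else x2.

Unset Implicit Arguments.
Fixpoint interp (V : Type) (M : structure V) (t : term V)
  : carrier M -> carrier M -> Prop :=
  match t with
  | Var a => @rel_of V M a
  | Bot => fun _ _ => False
  | Top => fun _ _ => True
  | Cup t s => fun x y => interp V M t x y \/ interp V M s x y
  | Cap t s => fun x y => interp V M t x y /\ interp V M s x y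
  | Compl t => fun x y => ~ interp V M t x y
  | Iden => fun x y => x = y
  | Diff => fun x y => x <> y
  | Comp t s => fun x y => exists z, interp V M t x z /\ interp V M s z y
  | Dag t s => fun x y => forall z, interp V M t x z \/ interp V M s z y
  | Perm t p => fun x1 x2 => interp V M t (tup x1 x2 (p ord0)) (tup x1 x2 (p (@Ordinal 2 1 isT)))
  end.
Set Implicit Arguments.

Definition rel_equiv (V : Type) (t s : term V) : Prop :=
  forall (M : structure V) (x y : carrier M), interp V M t x y <-> interp V M s x y.

Fixpoint vo (V : Type) (t : term V) : nat :=
  match t with
  | Var _ => 1
  | Bot | Top | Iden | Diff => 0
  | Cup t s | Cap t s | Comp t s | Dag t s => vo t + vo s
  | Compl t | Perm t _ => vo t
  end.

Fixpoint in_Sigma0 (V : Type) (t : term V) : Prop :=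
  match t with
  | Var _ | Bot | Top | Iden | Diff => True
  | Cup t s | Cap t s => in_Sigma0 t /\ in_Sigma0 s
  | Compl t | Perm t _ => in_Sigma0 t
  | Comp _ _ | Dag _ _ => False
  end.

Inductive in_Sigma1 (V : Type) : term V -> Prop :=
| S1_base t : in_Sigma0 t -> in_Sigma1 t
| S1_cup t s : in_Sigma1 t -> in_Sigma1 s -> in_Sigma1 (Cup t s)
| S1_cap t s : in_Sigma1 t -> in_Sigma1 s -> in_Sigma1 (Cap t s)
| S1_comp t s : in_Sigma1 t -> in_Sigma1 s -> in_Sigma1 (Comp t s)
| S1_perm t p : in_Sigma1 t -> in_Sigma1 (Perm t p).

Fixpoint in_T_capcompID (V : Type) (t : term V) : Prop :=
  match t with
  | Var _ | Iden | Diff => True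
  | Cap t s | Comp t s => in_T_capcompID t /\ in_T_capcompID s
  | _ => False
  end.

Definition finite_quotient_le (V : Type) (S : term V -> Prop) (k : nat) : Prop :=
  exists reps : list (term V),
    (forall r, In r reps -> S r /\ (vo r <= k)%N) /\
    (forall t, S t -> (vo t <= k)%N -> exists r, In r reps /\ rel_equiv t r).

(* Main.v *)
Require Import Defs.
From mathcomp Require Import all_boot.
From mathcomp Require Import zify.
From Stdlib Require Import List Classical ClassicalEpsilon FunctionalExtensionality.
Set Implicit Arguments. Unset Strict Implicit. Unset Printing Implicit Defensive.
Set Bullet Behavior "Strict Subproofs".

Definition dec (P : Prop) : bool := if excluded_middle_informative P then true else false.
Lemma decP P : dec P = true <-> P.
Proof. unfold dec; destruct (excluded_middle_informative P); split; intuition; discriminate. Qed.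
Lemma dec_iff P Q : (P <-> Q) -> dec P = dec Q.
Proof. intro H; unfold dec; destruct (excluded_middle_informative P), (excluded_middle_informative Q);
  first [reflexivity | exfalso; tauto]. Qed.

Definition bits := (bool * bool * bool * bool * bool)%type.
Definition bitsof (V:Type) (a : V) (M : structure V) (x y : carrier M) : bits :=
  (dec (@rel_of V M a x y), dec (@rel_of V M a y x), dec (@rel_of V M a x x), dec (@rel_of V M a y y), dec (x = y)).
Arguments bitsof {V} a M x y.
Definition Msub (V:Type) (M : structure V) (a : V) (f : bits -> bool) : structure V :=
  @Structure V (carrier M) (inhabitant M) (fun _ x y => f (bitsof a M x y) = true).

Fixpoint allvar (V:Type) (a : V) (t : term V) : Prop :=
  match t with
  | Var b => b = a
  | Cup t s | Cap t s | Comp t s | Dag t s => allvar a t /\ allvar a s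
  | Compl t | Perm t _ => allvar a t
  | _ => True end.

Lemma vo0_allvar (V:Type) (a:V) t : vo t = 0 -> allvar a t.
Proof. induction t; simpl; intros H; try split; try tauto;
  try (apply IHt1; lia); try (apply IHt2; lia); try (apply IHt; lia); lia. Qed.

Lemma vo1_allvar (V:Type) (a0:V) t : (vo t <= 1)%N -> exists a : V, allvar a t.
Proof.
  induction t; simpl; intros H; try (exists a0; exact I);
  try (destruct (vo t1) eqn:E1;
    [ destruct (IHt2 ltac:(lia)) as [a Ha]; exists a; split; [apply vo0_allvar; lia| exact Ha]
    | destruct (IHt1 ltac:(lia)) as [a Ha]; exists a; split; [exact Ha|apply vo0_allvar; lia]]).
  - exists v; reflexivity.
  - auto.
  - auto.
Qed.

Definition pb (c0 c1 : bool) (b : bits) : bits :=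
  let '(b1,b2,b3,b4,b5) := b in
  match c0, c1 with
  | true, true => (b3,b3,b3,b3,true)
  | true, false => (b1,b2,b3,b4,b5)
  | false, true => (b2,b1,b4,b3,b5)
  | false, false => (b4,b4,b4,b4,true) end.

Lemma bits_pb V (a:V) (M : structure V) x y c0 c1 :
  bitsof a M (if c0 then x else y) (if c1 then x else y) = pb c0 c1 (bitsof a M x y).
Proof.
  have E1 : dec (x = x) = true by apply decP.
  have E2 : dec (y = y) = true by apply decP.
  have E3 : dec (y = x) = dec (x = y) by apply dec_iff; split; auto.
  destruct c0, c1; unfold bitsof, pb; simpl; by rewrite ?E1 ?E2 ?E3.
Qed.

Lemma sigma0_atom V (a:V) t : in_Sigma0 t -> allvar a t ->
  exists f : bits -> bool, forall M x y, interp V M t x y <-> f (bitsof a M x y) = true.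
Proof.
  induction t; simpl; intros H0 Ha; try contradiction.
  - subst. exists (fun b => b.1.1.1.1). intros; simpl. symmetry; apply decP.
  - exists (fun _ => false); intros; simpl; split; [tauto|discriminate].
  - exists (fun _ => true); intros; simpl; tauto.
  - destruct H0, Ha. destruct (IHt1 H H1) as [f1 Hf1]; destruct (IHt2 H0 H2) as [f2 Hf2].
    exists (fun b => f1 b || f2 b); intros M x y; specialize (Hf1 M x y); specialize (Hf2 M x y).
    destruct (f1 (bitsof a M x y)), (f2 (bitsof a M x y)); simpl; intuition discriminate.
  - destruct H0, Ha. destruct (IHt1 H H1) as [f1 Hf1]; destruct (IHt2 H0 H2) as [f2 Hf2].
    exists (fun b => f1 b && f2 b); intros M x y; specialize (Hf1 M x y); specialize (Hf2 M x y).
    destruct (f1 (bitsof a M x y)), (f2 (bitsof a M x y)); simpl; intuition discriminate.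
  - destruct (IHt H0 Ha) as [f1 Hf1].
    exists (fun b => negb (f1 b)); intros M x y; specialize (Hf1 M x y).
    destruct (f1 (bitsof a M x y)); simpl; intuition discriminate.
  - exists (fun b => b.2); intros; simpl. symmetry; apply decP.
  - exists (fun b => negb b.2); intros; simpl. generalize (decP (x = y)).
    destruct (dec (x = y)); simpl; intuition discriminate.
  - destruct (IHt H0 Ha) as [f Hf].
    exists (fun b => f (pb (val (o ord0) == 0%N) (val (o (@Ordinal 2 1 isT)) == 0%N) b)).
    intros M x y. etransitivity; [apply Hf|]. unfold tup. rewrite bits_pb. reflexivity.
Qed.

Lemma sigma0_vo0 V t : in_Sigma0 t -> vo t = 0 ->
  exists bI bD : bool, forall (M : structure V) x y,
   (x = y -> (interp V M t x y <-> bI = true)) /\ (x <> y -> (interp V M t x y <-> bD = true)).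
Proof.
  induction t; simpl; intros H0 Hv; try contradiction; try lia.
  - exists false, false; intros; simpl; intuition discriminate.
  - exists true, true; intros; simpl; intuition.
  - destruct H0. destruct (IHt1 H ltac:(lia)) as [i1 [d1 H1]]; destruct (IHt2 H0 ltac:(lia)) as [i2 [d2 H2]].
    exists (i1 || i2), (d1 || d2); intros M x y; specialize (H1 M x y); specialize (H2 M x y).
    destruct i1, i2, d1, d2; simpl; intuition discriminate.
  - destruct H0. destruct (IHt1 H ltac:(lia)) as [i1 [d1 H1]]; destruct (IHt2 H0 ltac:(lia)) as [i2 [d2 H2]].
    exists (i1 && i2), (d1 && d2); intros M x y; specialize (H1 M x y); specialize (H2 M x y).
    destruct i1, i2, d1, d2; simpl; intuition discriminate.
  - destruct (IHt H0 Hv) as [i1 [d1 H1]].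
    exists (negb i1), (negb d1); intros M x y; specialize (H1 M x y).
    destruct i1, d1; simpl; intuition discriminate.
  - exists true, false; intros; simpl; intuition discriminate.
  - exists false, true; intros; simpl; intuition discriminate.
  - destruct (IHt H0 Hv) as [i1 [d1 H1]]. unfold tup.
    destruct (val (o ord0) == 0%N), (val (o (@Ordinal 2 1 isT)) == 0%N).
    + exists i1, i1; intros M x y; destruct (H1 M x x) as [H _]; specialize (H erefl); tauto.
    + exists i1, d1; intros M x y; apply H1.
    + exists i1, d1; intros M x y; destruct (H1 M y x) as [Ha Hb]; split; intros E;
        [apply Ha; auto | apply Hb; auto].
    + exists i1, i1; intros M x y; destruct (H1 M y y) as [H _]; specialize (H erefl); tauto.
Qed.

Lemma interp_vo0 V t : vo t = 0 -> forall (C:Type) (i:C) r1 r2 x y,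
  interp V (@Structure V C i r1) t x y <-> interp V (@Structure V C i r2) t x y.
Proof.
  induction t; simpl; intros Hv C i r1 r2; try lia; try (intros; tauto).
  - have E1 : vo t1 = 0 by lia. have E2 : vo t2 = 0 by lia. specialize (IHt1 E1 C i r1 r2); specialize (IHt2 E2 C i r1 r2); intros; firstorder.
  - have E1 : vo t1 = 0 by lia. have E2 : vo t2 = 0 by lia. specialize (IHt1 E1 C i r1 r2); specialize (IHt2 E2 C i r1 r2); intros; firstorder.
  - specialize (IHt Hv C i r1 r2); intros; firstorder.
  - have E1 : vo t1 = 0 by lia. have E2 : vo t2 = 0 by lia. specialize (IHt1 E1 C i r1 r2); specialize (IHt2 E2 C i r1 r2); intros x y; split;
      intros [z [H1 H2]]; exists z; split; [apply IHt1, H1 | apply IHt2, H2 | apply IHt1, H1 | apply IHt2, H2].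
  - have E1 : vo t1 = 0 by lia. have E2 : vo t2 = 0 by lia. specialize (IHt1 E1 C i r1 r2); specialize (IHt2 E2 C i r1 r2); intros x y; split.
    + intros H z; destruct (H z) as [Hz|Hz]; [left; apply IHt1, Hz | right; apply IHt2, Hz].
    + intros H z; destruct (H z) as [Hz|Hz]; [left; apply IHt1, Hz | right; apply IHt2, Hz].
  - specialize (IHt Hv C i r1 r2); intros; apply IHt.
Qed.

Lemma interp_vo0_M V (a:V) f g (M : structure V) t x y : vo t = 0 ->
  interp V (Msub M a f) t x y <-> interp V (Msub M a g) t x y.
Proof. intros H; apply interp_vo0; exact H. Qed.
Arguments interp_vo0_M {V} a f g M t x y _.

Definition desc V := (term V * (bits -> bool))%type.
Definition Dd V (a:V) (d : desc V) (M : structure V) (x y : carrier M) : Prop :=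
  interp V (Msub M a d.2) d.1 x y.
Arguments Dd {V} a d M x y.

Definition capd V (d1 d2 : desc V) : desc V :=
  (Cap d1.1 d2.1, if (vo d1.1 == 0)%N then d2.2 else d1.2).
Definition compd V (d1 d2 : desc V) : desc V :=
  (Comp d1.1 d2.1, if (vo d1.1 == 0)%N then d2.2 else d1.2).

Lemma capd_ok V (a:V) d1 d2 M x y : (vo d1.1 + vo d2.1 <= 1)%N ->
  (Dd a (capd d1 d2) M x y <-> Dd a d1 M x y /\ Dd a d2 M x y).
Proof.
  destruct d1 as [u f], d2 as [w g]; unfold Dd, capd; cbn [fst snd interp]. intros H.
  case: eqP => E.
  - have := interp_vo0_M a f g M u x y E. tauto.
  - have E2 : vo w = 0 by lia. have := interp_vo0_M a f g M w x y E2. tauto.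
Qed.

Lemma compd_ok V (a:V) d1 d2 M x y : (vo d1.1 + vo d2.1 <= 1)%N ->
  (Dd a (compd d1 d2) M x y <-> exists z, Dd a d1 M x z /\ Dd a d2 M z y).
Proof.
  destruct d1 as [u f], d2 as [w g]; unfold Dd, compd; cbn [fst snd interp]. intros H.
  case: eqP => E.
  - have := fun x y => interp_vo0_M a f g M u x y E. firstorder.
  - have E2 : vo w = 0 by lia. have := fun x y => interp_vo0_M a f g M w x y E2. firstorder.
Qed.

Fixpoint conv V (t : term V) : term V := match t with
 | Cap t s => Cap (conv t) (conv s)
 | Comp t s => Comp (conv s) (conv t)
 | t => t end.

Definition swapb (b : bits) : bits := let '(b1,b2,b3,b4,b5) := b in (b2,b1,b4,b3,b5).

Lemma bits_swap V (a:V) M x y : bitsof a M y x = swapb (bitsof a M x y).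
Proof.
  have E3 : dec (y = x) = dec (x = y) by apply dec_iff; split; auto.
  unfold bitsof, swapb; by rewrite E3.
Qed.
Arguments bits_swap {V} a M x y.

Lemma conv_ok V (a:V) t f M : in_T_capcompID t -> forall x y,
  interp V (Msub M a (fun b => f (swapb b))) (conv t) x y <-> interp V (Msub M a f) t y x.
Proof.
  induction t; simpl; intros HT; try contradiction.
  - intros x y. rewrite (bits_swap a M x y). reflexivity.
  - destruct HT as [H1 H2]; specialize (IHt1 H1); specialize (IHt2 H2); intros x y;
    specialize (IHt1 x y); specialize (IHt2 x y); tauto.
  - intros; split; auto.
  - intros; split; auto.
  - destruct HT as [H1 H2]; specialize (IHt1 H1); specialize (IHt2 H2); intros x y; split;
    intros [z [A B]]; exists z; split.
    + apply (IHt1 z y), B.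
    + apply (IHt2 x z), A.
    + apply (IHt2 x z), B.
    + apply (IHt1 z y), A.
Qed.

Lemma conv_props V (t : term V) : in_T_capcompID t -> in_T_capcompID (conv t) /\ vo (conv t) = vo t.
Proof. induction t; simpl; try tauto; intros [H1 H2]; destruct (IHt1 H1), (IHt2 H2); split; auto; lia. Qed.

Definition permd V (c0 c1 : bool) (d : desc V) : list (desc V) :=
  let (u, f) := d in
  match c0, c1 with
  | true, false => [:: (u,f)]
  | false, true => [:: (conv u, fun b => f (swapb b))]
  | true, true => [:: (Comp (Cap u Iden) Iden, f); (Comp (Cap u Iden) Diff, f)]
  | false, false => [:: (Comp Iden (Cap u Iden), f); (Comp Diff (Cap u Iden), f)]
  end.

Lemma permd_props V c0 c1 (d : desc V) d' : in_T_capcompID d.1 -> In d' (permd c0 c1 d) ->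
  in_T_capcompID d'.1 /\ vo d'.1 = vo d.1.
Proof.
  destruct d as [u f]; simpl; intros HT.
  destruct c0, c1; simpl; intros H; repeat destruct H as [H|H]; subst; simpl; try contradiction;
  try (split; [tauto | lia]).
  apply conv_props; auto.
Qed.

Lemma permd_ok V (a:V) c0 c1 (d : desc V) M x y : in_T_capcompID d.1 ->
  (Dd a d M (if c0 then x else y) (if c1 then x else y) <->
   exists d', In d' (permd c0 c1 d) /\ Dd a d' M x y).
Proof.
  destruct d as [u f]; unfold Dd; simpl; intros HT.
  destruct c0, c1; simpl.
  - split.
    + intros H. destruct (classic (x = y)) as [E|E].
      * exists (Comp (Cap u Iden) Iden, f); split; [left; reflexivity|]; simpl; exists x; auto.
      * exists (Comp (Cap u Iden) Diff, f); split; [right; left; reflexivity|]; simpl; exists x; auto.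
    + intros [d' [H1 H2]]. repeat destruct H1 as [H1|H1]; subst; simpl in H2; try contradiction;
      destruct H2 as [z [[H2 E] _]]; subst; auto.
  - split.
    + intros H; exists (u, f); split; [left; reflexivity | exact H].
    + intros [d' [H1 H2]]. repeat destruct H1 as [H1|H1]; subst; simpl in H2; try contradiction; exact H2.
  - split.
    + intros H; exists (conv u, fun b => f (swapb b)); split; [left; reflexivity|].
      simpl. apply conv_ok; auto.
    + intros [d' [H1 H2]]. repeat destruct H1 as [H1|H1]; subst; simpl in H2; try contradiction.
      apply (@conv_ok V a u f M HT); exact H2.
  - split.
    + intros H. destruct (classic (x = y)) as [E|E].
      * exists (Comp Iden (Cap u Iden), f); split; [left; reflexivity|]; simpl; exists y; auto.
      * exists (Comp Diff (Cap u Iden), f); split; [right; left; reflexivity|]; simpl; exists y; auto.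
    + intros [d' [H1 H2]]. repeat destruct H1 as [H1|H1]; subst; simpl in H2; try contradiction;
      destruct H2 as [z [_ [H2 E]]]; subst; auto.
Qed.

Definition NF V (a:V) (t : term V) (l : list (desc V)) : Prop :=
  (forall d, In d l -> in_T_capcompID d.1 /\ (vo d.1 <= vo t)%N) /\
  forall M x y, interp V M t x y <-> exists d, In d l /\ Dd a d M x y.

Lemma sigma1_nf V (a:V) t : in_Sigma1 t -> (vo t <= 1)%N -> allvar a t -> exists l, NF a t l.
Proof.
  intros H; induction H; intros Hv Ha.
  - destruct (vo t) eqn:E.
    + destruct (sigma0_vo0 H E) as [bI [bD Hb]].
      exists ((if bI then [:: (Iden, fun _ : bits => true)] else [::]) ++
              (if bD then [:: (Diff, fun _ : bits => true)] else [::])).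
      split.
      * intros d Hd; apply in_app_iff in Hd; destruct bI, bD; simpl in Hd;
        repeat destruct Hd as [Hd|Hd]; subst; simpl; try contradiction; split; auto.
      * intros M x y; destruct (Hb M x y) as [B1 B2].
        destruct (classic (x = y)) as [Exy|Exy].
        -- specialize (B1 Exy); rewrite B1; destruct bI, bD; unfold Dd; simpl;
           split; intros HH; try discriminate;
           try (exists (Iden, fun _ : bits => true); simpl; auto; fail);
           try (destruct HH as [d [Hd Hd']]; repeat destruct Hd as [Hd|Hd]; subst; simpl in Hd'; try contradiction; auto).
        -- specialize (B2 Exy); rewrite B2; destruct bI, bD; unfold Dd; simpl;
           split; intros HH; try discriminate;
           try (exists (Diff, fun _ : bits => true); simpl; auto; fail);
           try (destruct HH as [d [Hd Hd']]; repeat destruct Hd as [Hd|Hd]; subst; simpl in Hd'; try contradiction; auto).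
    + destruct (sigma0_atom H Ha) as [f Hf].
      exists [:: (Var a, f)]. split.
      * intros d [Hd|[]]; subst; simpl; split; auto; lia.
      * intros M x y; rewrite Hf; split.
        -- intros HH; exists (Var a, f); split; [left; reflexivity | exact HH].
        -- intros [d [[Hd|[]] HH]]; subst; exact HH.
  - simpl in Hv, Ha; destruct Ha as [Ha1 Ha2].
    destruct (IHin_Sigma1_1 ltac:(lia) Ha1) as [l1 [P1 S1]].
    destruct (IHin_Sigma1_2 ltac:(lia) Ha2) as [l2 [P2 S2]].
    exists (l1 ++ l2); split.
    + intros d Hd; apply in_app_iff in Hd; destruct Hd as [Hd|Hd];
      [destruct (P1 d Hd) | destruct (P2 d Hd)]; simpl; split; auto; lia.
    + intros M x y; simpl; rewrite S1 S2; split.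
      * intros [[d [Hd H']]|[d [Hd H']]]; exists d; rewrite in_app_iff; auto.
      * intros [d [Hd H']]; apply in_app_iff in Hd; destruct Hd; [left|right]; exists d; auto.
  - simpl in Hv, Ha; destruct Ha as [Ha1 Ha2].
    destruct (IHin_Sigma1_1 ltac:(lia) Ha1) as [l1 [P1 S1]].
    destruct (IHin_Sigma1_2 ltac:(lia) Ha2) as [l2 [P2 S2]].
    exists (List.map (fun p => capd p.1 p.2) (list_prod l1 l2)); split.
    + intros d Hd; apply in_map_iff in Hd; destruct Hd as [[d1 d2] [E Hp]]; subst.
      apply in_prod_iff in Hp; destruct Hp as [Hp1 Hp2].
      destruct (P1 d1 Hp1), (P2 d2 Hp2); simpl; split; auto; lia.
    + intros M x y; simpl; rewrite S1 S2; split.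
      * intros [[d1 [Hd1 H1']] [d2 [Hd2 H2']]]. exists (capd d1 d2); split.
        -- apply in_map_iff; exists (d1, d2); split; [reflexivity | apply in_prod; auto].
        -- apply capd_ok; [destruct (P1 d1 Hd1), (P2 d2 Hd2); lia | auto].
      * intros [d [Hd H']]; apply in_map_iff in Hd; destruct Hd as [[d1 d2] [E Hp]]; subst.
        apply in_prod_iff in Hp; destruct Hp as [Hp1 Hp2].
        have Hs : (vo d1.1 + vo d2.1 <= 1)%N by destruct (P1 d1 Hp1), (P2 d2 Hp2); lia.
        apply (proj1 (@capd_ok V a d1 d2 M x y Hs)) in H'.
        destruct H'; split; [exists d1 | exists d2]; auto.
  - simpl in Hv, Ha; destruct Ha as [Ha1 Ha2].
    destruct (IHin_Sigma1_1 ltac:(lia) Ha1) as [l1 [P1 S1]].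
    destruct (IHin_Sigma1_2 ltac:(lia) Ha2) as [l2 [P2 S2]].
    exists (List.map (fun p => compd p.1 p.2) (list_prod l1 l2)); split.
    + intros d Hd; apply in_map_iff in Hd; destruct Hd as [[d1 d2] [E Hp]]; subst.
      apply in_prod_iff in Hp; destruct Hp as [Hp1 Hp2].
      destruct (P1 d1 Hp1), (P2 d2 Hp2); simpl; split; auto; lia.
    + intros M x y; simpl; split.
      * intros [z [Z1 Z2]]. apply S1 in Z1; apply S2 in Z2.
        destruct Z1 as [d1 [Hd1 H1']], Z2 as [d2 [Hd2 H2']]. exists (compd d1 d2); split.
        -- apply in_map_iff; exists (d1, d2); split; [reflexivity | apply in_prod; auto].
        -- apply compd_ok; [destruct (P1 d1 Hd1), (P2 d2 Hd2); lia | exists z; auto].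
      * intros [d [Hd H']]; apply in_map_iff in Hd; destruct Hd as [[d1 d2] [E Hp]]; subst.
        apply in_prod_iff in Hp; destruct Hp as [Hp1 Hp2].
        have Hs : (vo d1.1 + vo d2.1 <= 1)%N by destruct (P1 d1 Hp1), (P2 d2 Hp2); lia.
        apply (proj1 (@compd_ok V a d1 d2 M x y Hs)) in H'.
        destruct H' as [z [Z1 Z2]]; exists z; split; [apply S1 | apply S2]; [exists d1 | exists d2]; auto.
  - simpl in Hv, Ha.
    destruct (IHin_Sigma1 Hv Ha) as [l [P S]].
    exists (flat_map (permd (val (p ord0) == 0%N) (val (p (@Ordinal 2 1 isT)) == 0%N)) l); split.
    + intros d Hd; apply in_flat_map in Hd; destruct Hd as [d0 [Hd0 Hd]].
      destruct (P d0 Hd0) as [T0 V0].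
      destruct (permd_props T0 Hd) as [T1 V1]; split; auto; simpl; lia.
    + intros M x y. change (interp V M (Perm t p) x y) with
        (interp V M t (tup x y (p ord0)) (tup x y (p (@Ordinal 2 1 isT)))).
      unfold tup. rewrite S. split.
      * intros [d0 [Hd0 H0]]. destruct (P d0 Hd0) as [T0 _].
        apply (@permd_ok V a _ _ d0 M x y T0) in H0. destruct H0 as [d [Hd H1]].
        exists d; split; auto. apply in_flat_map; exists d0; auto.
      * intros [d [Hd H1]]. apply in_flat_map in Hd; destruct Hd as [d0 [Hd0 Hd]].
        destruct (P d0 Hd0) as [T0 _]. exists d0; split; auto.
        apply (@permd_ok V a _ _ d0 M x y T0). exists d; auto.
Qed.

Fixpoint pw X (l : list X) : list (list X) :=
  match l with
  | nil => [:: nil]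
  | x :: l => pw l ++ List.map (cons x) (pw l)
  end.

Lemma pw_ok X (U : list X) (P : X -> Prop) :
  exists s, In s (pw U) /\ forall x, In x s <-> In x U /\ P x.
Proof.
  induction U as [|u U IH]; simpl.
  - exists nil; split; [left; reflexivity | simpl; tauto].
  - destruct IH as [s [Hs Hx]]. destruct (classic (P u)) as [Pu|Pu].
    + exists (u :: s); split.
      * apply in_app_iff; right; apply in_map; exact Hs.
      * intros x; simpl; rewrite Hx; split; [intros [E|[A B]]; [subst|]; auto | ].
        intros [[E|A] B]; auto.
    + exists s; split.
      * apply in_app_iff; left; exact Hs.
      * intros x; rewrite Hx; split; [intros [A B]; auto|].
        intros [[E|A] B]; [subst; contradiction | auto].
Qed.

Lemma pick_reps X (T : Type) (L : list X) (Q : X -> T -> Prop) : exists reps : list T,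
  (forall r, In r reps -> exists x, In x L /\ Q x r) /\
  (forall x, In x L -> (exists t, Q x t) -> exists r, In r reps /\ Q x r).
Proof.
  induction L as [|u L IH].
  - exists nil; split; [intros r [] | intros x []].
  - destruct IH as [reps [R1 R2]]. destruct (classic (exists t, Q u t)) as [[t Ht]|Hn].
    + exists (t :: reps); split.
      * intros r [E|Hr]; [subst; exists u; split; [left|]; auto|].
        destruct (R1 r Hr) as [x [Hx Q']]; exists x; split; [right|]; auto.
      * intros x [E|Hx] Hex; [subst; exists t; split; [left|]; auto|].
        destruct (R2 x Hx Hex) as [r [Hr Q']]; exists r; split; [right|]; auto.
    + exists reps; split.
      * intros r Hr; destruct (R1 r Hr) as [x [Hx Q']]; exists x; split; [right|]; auto.
      * intros x [E|Hx] Hex; [subst; contradiction|].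
        destruct (R2 x Hx Hex) as [r [Hr Q']]; exists r; split; auto.
Qed.

Lemma in_seq_In (T : eqType) (x : T) (s : list T) : x \in s -> In x s.
Proof.
  elim: s => [|y s IH]; first by [].
  rewrite seq.in_cons => /orP [/eqP -> | H]; [left | right]; auto.
Qed.

Definition trip (V : Type) := (V * term V * {ffun bits -> bool})%type.
Definition Den3 V (e : trip V) (M : structure V) (x y : carrier M) : Prop :=
  interp V (Msub M e.1.1 (fun b => e.2 b)) e.1.2 x y.
Arguments Den3 {V} e M x y.

Lemma convert (V : Type) (a : V) (repsT : list (term V))
  (HT : forall t, in_T_capcompID t -> (vo t <= 1)%N -> exists r, In r repsT /\ rel_equiv t r)
  (l : list (desc V)) :
  (forall d, In d l -> in_T_capcompID d.1 /\ (vo d.1 <= 1)%N) ->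
  exists l3 : list (trip V),
   (forall e, In e l3 -> e.1.1 = a /\ In e.1.2 repsT) /\
   forall M x y, (exists d, In d l /\ Dd a d M x y) <-> (exists e, In e l3 /\ Den3 e M x y).
Proof.
  induction l as [|d l IH]; intros Hl.
  - exists nil; split; [intros e []|]. intros; split; intros [d [[] _]].
  - destruct IH as [l3 [L1 L2]]; [intros d' Hd'; apply Hl; right; exact Hd'|].
    destruct (Hl d (or_introl erefl)) as [T1 V1].
    destruct (HT d.1 T1 V1) as [r [Hr Er]].
    exists ((a, r, [ffun b => d.2 b]) :: l3); split.
    + intros e [E|He]; [subst; simpl; auto | apply L1; exact He].
    + have key : forall M x y, Dd a d M x y <-> Den3 (a, r, [ffun b => d.2 b]) M x y.
      { intros M x y; unfold Dd, Den3; simpl.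
        have -> : (fun b => [ffun b0 => d.2 b0] b) = d.2.
        { apply functional_extensionality => b; by rewrite ffunE. }
        apply Er. }
      intros M x y; split.
      * intros [d' [[E|Hd'] H']].
        -- subst; exists (a, r, [ffun b => d'.2 b]); split; [left; reflexivity | apply key; exact H'].
        -- destruct (proj1 (L2 M x y) (ex_intro _ d' (conj Hd' H'))) as [e [He H'']].
           exists e; split; [right|]; auto.
      * intros [e [[E|He] H']].
        -- subst; exists d; split; [left; reflexivity | apply key; exact H'].
        -- destruct (proj2 (L2 M x y) (ex_intro _ e (conj He H'))) as [d' [Hd' H'']].
           exists d'; split; [right|]; auto.
Qed.

Theorem lemma4p9 (V : finType) (HV : (0 < #|V|)%N) :
  finite_quotient_le (@in_T_capcompID V) 1 ->
  finite_quotient_le (@in_Sigma1 V) 1.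
Proof.
  intros [repsT [HT1 HT2]].
  case/card_gt0P: HV => a0 _.
  pose U := list_prod (list_prod (enum V) repsT) (enum {ffun bits -> bool}).
  pose DenS (s : list (trip V)) (M : structure V) (x y : carrier M) := exists e, In e s /\ Den3 e M x y.
  pose Q (s : list (trip V)) (t : term V) :=
    in_Sigma1 t /\ (vo t <= 1)%N /\ forall M x y, interp V M t x y <-> DenS s M x y.
  destruct (pick_reps (pw U) Q) as [reps [R1 R2]].
  exists reps; split.
  - intros r Hr; destruct (R1 r Hr) as [s [_ [H1 [H2 _]]]]; auto.
  - intros t Ht Hvo.
    have [s [Hs Hsem]] : exists s, In s (pw U) /\ forall M x y, interp V M t x y <-> DenS s M x y.
    { destruct (vo1_allvar a0 Hvo) as [a Ha].
      destruct (sigma1_nf Ht Hvo Ha) as [l [P S]].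
      destruct (@convert V a repsT HT2 l) as [l3 [L1 L2]].
      { intros d Hd; destruct (P d Hd); split; auto; lia. }
      destruct (pw_ok U (fun e => In e l3)) as [s [Hs Hx]].
      exists s; split; auto.
      intros M x y; rewrite S L2; unfold DenS; split.
      - intros [e [He H']]; exists e; split; auto. apply Hx; split; auto.
        destruct (L1 e He) as [E1 E2]. destruct e as [[a' r] g]; simpl in *.
        apply in_prod; [apply in_prod|]; auto; apply in_seq_In; by rewrite mem_enum.
      - intros [e [He H']]; exists e; split; auto. apply Hx; auto. }
    destruct (R2 s Hs (ex_intro _ t (conj Ht (conj Hvo Hsem)))) as [r [Hr [_ [_ Hr']]]].
    exists r; split; auto. intros M x y; rewrite Hsem Hr'; tauto.
Qed.
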